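(* Let $\delta,\ell,n\in\mathbb{Z}^+$ with $\ell\mid n$ and $2\delta<\ell\le n/2$. The redundancy $r_\delta(\ell,n)$ of any block-by-block decodable code $\mathcal{C}\subseteq\mathbb{F}_2^n$ that detects up to $\delta$ deletions per block satisfies $$r_\delta(\ell,n)\ge(2\delta+1)(n/\ell-1).$$
   Context: A binary string $\mathbf{x}\in\mathbb{F}_2^n$ with $\ell\mid n$ is viewed as a concatenation $\mathbf{x}=\langle\mathbf{x}^1,\dots,\mathbf{x}^{n/\ell}\rangle$ of blocks $\mathbf{x}^j=(x_{1+(j-1)\ell},\dots,x_{j\ell})\in\mathbb{F}_2^\ell$. A code $\mathcal{C}\subseteq\mathbb{F}_2^n$ detects up to $\delta$ deletions per block if there is a decoding function $\mathrm{Dec}:\mathbb{F}_2^*\to\mathbb{Z}_{\delta+1}^{n/\ell}$ such that for every $\mathbf{x}\in\mathcal{C}$ and every string $\mathbf{y}$ obtained from $\mathbf{x}$ by deleting at most $\delta$ bits from each block (worst case), $\mathrm{Dec}(\mathbf{y})=(\delta_1,\dots,\delta_{n/\ell})$ where $\delta_j$ is the exact number of bits deleted from block $\mathbf{x}^j$. Such a code is block-by-block decodable if, letting $\alpha_j$ be the starting position of block $j$ in $\mathbf{y}$ (with $\alpha_1=1$), there is a decoder which can output the exact number of deletions in any block $\mathbf{x}^j$ by only processing the bits $y_{\alpha_j},\dots,y_{\alpha_j+\ell-1}$. The redundancy of $\mathcal{C}$ is $n-\log_2|\mathcal{C}|$. *)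

(* Defs.v *)
From mathcomp Require Import all_boot.
Set Implicit Arguments. Unset Strict Implicit. Unset Printing Implicit Defensive.

Definition block (l : nat) (x : bitseq) (j : nat) : bitseq :=
  take l (drop (j * l) x).

(* [del_out d l m x y ds]: y is obtained from x (with m blocks of length l)
   by deleting at most d bits from each block; ds lists the exact number of
   bits deleted from each block. *)
Definition del_out (d l m : nat) (x y : bitseq) (ds : seq nat) : Prop :=
  exists ss : seq bitseq,
    [/\ size ss = m,
        forall j, j < m ->
          subseq (nth [::] ss j) (block l x j) /\
          size (block l x j) - size (nth [::] ss j) <= d,
        y = flatten ss &
        ds = [seq size (block l x j) - size (nth [::] ss j) | j <- iota 0 m]].

Definition detects (n d l : nat) (C : {set n.-tuple bool}) : Prop :=
  exists Dec : bitseq -> seq nat,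
    forall (x : n.-tuple bool) y ds, x \in C ->
      del_out d l (n %/ l) x y ds -> Dec y = ds.

(* Starting position (0-indexed) of block j in y: alpha_j - 1. *)
Definition start_pos (l : nat) (ds : seq nat) (j : nat) : nat :=
  \sum_(i < j) (l - nth 0 ds i).

(* Block-by-block decodable: the number of deletions in block j can be
   recovered from the l bits y_{alpha_j}, ..., y_{alpha_j + l - 1} alone
   (truncated if y ends earlier). *)
Definition bbb_decodable (n d l : nat) (C : {set n.-tuple bool}) : Prop :=
  exists D : nat -> bitseq -> nat,
    forall (x : n.-tuple bool) y ds, x \in C ->
      del_out d l (n %/ l) x y ds ->
      forall j, j < n %/ l ->
        D j (take l (drop (start_pos l ds j) y)) = nth 0 ds j.

(* Main.v *)
Require Import Defs.
From mathcomp Require Import all_boot zify.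
Set Implicit Arguments. Unset Strict Implicit. Unset Printing Implicit Defensive.

Lemma size_block l m (x : bitseq) q : size x = m * l -> q < m -> size (block l x q) = l.
Proof.
move=> hx hq; rewrite /block size_takel // size_drop hx.
have : q.+1 * l <= m * l by rewrite leq_mul2r hq orbT.
rewrite mulSn; lia.
Qed.

Lemma nth_block l (x : bitseq) q r : r < l -> nth false (block l x q) r = nth false x (q * l + r).
Proof. by move=> hr; rewrite /block nth_take // nth_drop. Qed.

Definition win l (x : bitseq) j p i :=
  take p (block l x j) ++ take (l - p) (drop i (block l x j.+1)).

Lemma size_win l m d (x : bitseq) j p i : size x = m * l -> j.+1 < m ->
  l - d <= p <= l -> i <= d -> 2 * d < l -> size (win l x j p i) = l.
Proof.
move=> hx hj /andP[hp1 hp2] hi hd.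
have h1 := size_block hx (ltnW hj). have h2 := size_block hx hj.
have h3 : size (take p (block l x j)) = p by rewrite size_takel ?h1.
have h4 : size (take (l - p) (drop i (block l x j.+1))) = l - p.
  by rewrite size_takel // size_drop h2; lia.
rewrite /win size_cat h3 h4; lia.
Qed.

Lemma nth_win l m d (x : bitseq) j p i r : size x = m * l -> j.+1 < m ->
  l - d <= p <= l -> i <= d -> 2 * d < l -> r < l ->
  nth false (win l x j p i) r =
  if r < p then nth false x (j * l + r) else nth false x (j.+1 * l + (i + (r - p))).
Proof.
move=> hx hj /andP[hp1 hp2] hi hd hr.
rewrite /win nth_cat size_takel ?(size_block hx) //; try lia.
case: ltnP => h; first by rewrite nth_take // nth_block.
rewrite nth_take; last lia.
rewrite nth_drop nth_block //; lia.
Qed.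

Lemma size_flat_blocks l m (x : bitseq) a k : size x = m * l -> a + k <= m ->
  size (flatten [seq block l x q | q <- iota a k]) = k * l.
Proof.
move=> hx; elim: k a => [|k IH] a hak //=.
rewrite size_cat (size_block hx); last lia.
rewrite IH; last lia. by rewrite mulSn.
Qed.

Lemma W n d l (C : {set n.-tuple bool}) (D : nat -> bitseq -> nat)
  (HD : forall (x : n.-tuple bool) y ds, x \in C ->
      del_out d l (n %/ l) x y ds ->
      forall j, j < n %/ l ->
        D j (take l (drop (start_pos l ds j) y)) = nth 0 ds j)
  (x : n.-tuple bool) (hx : x \in C) (hn : n = n %/ l * l) j (hj : j.+1 < n %/ l)
  p i (hp : l - d <= p <= l) (hi : i <= d) (hdl : 2 * d < l) :
  D j (win l x j p i) = l - p.
Proof.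
set m := n %/ l. move: hj hn; rewrite -/m => hj hn.
have hsx : size x = m * l by rewrite size_tuple.
move: hp => /andP[hp1 hp2].
set B := block l x.
set s := take p (B j). set t := drop i (B j.+1).
set R := [seq B q | q <- iota j.+2 (m - j.+2)].
set ss := [seq B q | q <- iota 0 j] ++ s :: t :: R.
have nthss : forall q, q < m -> nth [::] ss q =
    if q == j then s else if q == j.+1 then t else B q.
  move=> q hq; rewrite /ss nth_cat size_map size_iota.
  case: ltnP => h1.
    rewrite (nth_map 0) ?size_iota // nth_iota //.
    have -> : (q == j) = false by apply/eqP; lia.
    have -> : (q == j.+1) = false by apply/eqP; lia.
    by [].
  case E: (q - j) => [|[|k]] /=.
  - have -> : q = j by lia.
    by rewrite eqxx.
  - have -> : (q == j) = false by apply/eqP; lia.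
    have -> : q = j.+1 by lia.
    by rewrite eqxx.
  - have -> : (q == j) = false by apply/eqP; lia.
    have -> : (q == j.+1) = false by apply/eqP; lia.
    rewrite /R (nth_map 0) ?size_iota; last lia.
    rewrite nth_iota; last lia.
    congr B; lia.
have hB : forall q, q < m -> size (B q) = l by move=> q; apply: size_block.
set ds := [seq size (block l x q) - size (nth [::] ss q) | q <- iota 0 m].
have hdel : del_out d l m x (flatten ss) ds.
  exists ss; split => //.
  - rewrite /ss /R size_cat /= !size_map !size_iota; lia.
  - move=> q hq; rewrite nthss //.
    case: eqP => [->|_].
      rewrite /s take_subseq size_takel ?(size_block hsx) //; lia.
    case: eqP => [->|_].
      rewrite /t drop_subseq size_drop ?(size_block hsx) //; lia.
    by rewrite subseq_refl subnn.
have := HD x (flatten ss) ds hx hdel j (ltnW hj).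
have -> : nth 0 ds j = l - p.
  rewrite /ds (nth_map 0) ?size_iota; last lia.
  rewrite nth_iota; last lia.
  rewrite add0n nthss; last lia.
  rewrite eqxx -/(B j) hB; last lia.
  by rewrite size_takel // hB; lia.
have -> : start_pos l ds j = j * l.
  rewrite /start_pos (eq_bigr (fun _ => l)).
    by rewrite sum_nat_const card_ord.
  move=> i0 _; have hi0 := ltn_ord i0.
  rewrite /ds (nth_map 0) ?size_iota; last lia.
  rewrite nth_iota; last lia.
  rewrite add0n nthss; last lia.
  have -> : (nat_of_ord i0 == j) = false by apply/eqP; lia.
  have -> : (nat_of_ord i0 == j.+1) = false by apply/eqP; lia.
  by rewrite subnn subn0.
rewrite /ss flatten_cat drop_size_cat; last by rewrite (size_flat_blocks (m := m)) //; lia.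
rewrite /= take_cat size_takel ?hB //; try lia.
rewrite ltnNge hp2 /= takel_cat //; last first.
  rewrite size_drop hB //; lia.
Qed.

Definition HBBB n d l (C : {set n.-tuple bool}) (D : nat -> bitseq -> nat) :=
  forall (x : n.-tuple bool) y ds, x \in C ->
      del_out d l (n %/ l) x y ds ->
      forall j, j < n %/ l ->
        D j (take l (drop (start_pos l ds j) y)) = nth 0 ds j.

Ltac ll := try (apply/andP; split); lia.

Lemma neqb (a b : bool) : a != b -> a = ~~ b. Proof. by case: a; case: b. Qed.

Lemma S1 n d l C D (HD : HBBB d l C D) (x : n.-tuple bool) (hx : x \in C)
  (hn : n = n %/ l * l) (hd0 : 0 < d) (hdl : 2 * d < l) j (hj : j.+1 < n %/ l) i (hi : i <= d) :
  nth false x (j.+1 * l + i) = ~~ nth false x (j * l + (l - 1)).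
Proof.
have hsx : size x = n %/ l * l by rewrite size_tuple.
apply: neqb; apply/negP => /eqP E.
have hW0 := W HD hx hn hj (p := l) (i := 0).
have hW1 := W HD hx hn hj (p := l - 1) (i := i).
have : win l x j l 0 = win l x j (l - 1) i.
  apply: (eq_from_nth (x0 := false)).
    rewrite (size_win (m := n %/ l) (d := d)) ?(size_win (m := n %/ l) (d := d)) //; ll.
  move=> r; rewrite (size_win (m := n %/ l) (d := d)) //; last ll.
  move=> hr.
  rewrite (nth_win (m := n %/ l) (d := d)) //; last ll.
  rewrite (nth_win (m := n %/ l) (d := d)) //; last ll.
  rewrite hr; case: ltnP => h //.
  have -> : r = l - 1 by lia.
  by rewrite subnn addn0 E.
move=> EW.
have := hW1 _ hi hdl. rewrite -EW hW0 //; try ll.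
Qed.

Lemma S2 n d l C D (HD : HBBB d l C D) (x : n.-tuple bool) (hx : x \in C)
  (hn : n = n %/ l * l) (hd0 : 0 < d) (hdl : 2 * d < l) j (hj : j.+1 < n %/ l) k (hk : k < d) :
  nth false x (j * l + (l - 1 - k)) = nth false x (j * l + (l - 1)).
Proof.
have hsx : size x = n %/ l * l by rewrite size_tuple.
case: (boolP (nth false x (j * l + (l - 1 - k)) == nth false x (j * l + (l - 1)))) => [/eqP //|hne].
have ha := neqb hne.
have hc : forall t, t <= d -> nth false x (j.+1 * l + t) = ~~ nth false x (j * l + (l - 1)).
  by move=> t ht; apply: (S1 HD).
have hW0 := W HD hx hn hj (p := l - k) (i := 0).
have hW1 := W HD hx hn hj (p := l - k.+1) (i := 0).
have : win l x j (l - k) 0 = win l x j (l - k.+1) 0.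
  apply: (eq_from_nth (x0 := false)).
    rewrite (size_win (m := n %/ l) (d := d)) ?(size_win (m := n %/ l) (d := d)) //; ll.
  move=> r; rewrite (size_win (m := n %/ l) (d := d)) //; last ll.
  move=> hr.
  rewrite (nth_win (m := n %/ l) (d := d)) //; last ll.
  rewrite (nth_win (m := n %/ l) (d := d)) //; last ll.
  case: (ltnP r (l - k.+1)) => h1.
    by have -> : r < l - k by lia.
  case: (ltnP r (l - k)) => h2.
    rewrite add0n.
    have -> : r - (l - k.+1) = 0 by lia.
    have -> : r = l - 1 - k by lia.
    by rewrite ha addn0 -[X in _ = nth _ _ X]addn0 hc.
  rewrite !add0n !hc //; lia.
move=> EW.
have := hW1 _ _ hdl. rewrite -EW hW0 //; ll.
Qed.

Lemma Cross n d l C D (HD : HBBB d l C D) (x x' : n.-tuple bool) (hx : x \in C) (hx' : x' \in C)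
  (hn : n = n %/ l * l) (hd0 : 0 < d) (hdl : 2 * d < l) j (hj : j.+1 < n %/ l)
  (hag : forall r, r < l - d -> nth false x (j * l + r) = nth false x' (j * l + r)) :
  nth false x (j * l + (l - 1)) = nth false x' (j * l + (l - 1)).
Proof.
have hsx : size x = n %/ l * l by rewrite size_tuple.
have hsx' : size x' = n %/ l * l by rewrite size_tuple.
case: (boolP (nth false x (j * l + (l - 1)) == nth false x' (j * l + (l - 1)))) => [/eqP //|hne].
have hb := neqb hne.
have hW0 := W HD hx hn hj (p := l) (i := 0).
have hW1 := W HD hx' hn hj (p := l - d) (i := 0).
have : win l x j l 0 = win l x' j (l - d) 0.
  apply: (eq_from_nth (x0 := false)).
    rewrite (size_win (m := n %/ l) (d := d)) ?(size_win (m := n %/ l) (d := d)) //; ll.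
  move=> r; rewrite (size_win (m := n %/ l) (d := d)) //; last ll.
  move=> hr.
  rewrite (nth_win (m := n %/ l) (d := d)) //; last ll.
  rewrite (nth_win (m := n %/ l) (d := d)) //; last ll.
  rewrite hr; case: ltnP => h1; first by apply: hag.
  rewrite add0n (S1 HD) //; last lia.
  rewrite -hb.
  have -> : r = l - 1 - (l - 1 - r) by lia.
  apply: (S2 HD) => //; lia.
move=> EW.
have := hW1 _ _ hdl. rewrite -EW hW0 //; ll.
Qed.

Definition bm m d l q : bitseq :=
  nseq (if 0 < q then d.+1 else 0) false ++
  nseq (l - (if 0 < q then d.+1 else 0) - (if q < m.-1 then d else 0)) true ++
  nseq (if q < m.-1 then d else 0) false.

Lemma size_bm m d l q : 2 * d < l -> size (bm m d l q) = l.
Proof. move=> h; rewrite /bm !size_cat !size_nseq; case: ifP; case: ifP; lia. Qed.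

Lemma count_bm m d l q : 2 * d < l ->
  count id (bm m d l q) = l - (if 0 < q then d.+1 else 0) - (if q < m.-1 then d else 0).
Proof. move=> h; rewrite /bm !count_cat !count_nseq /=; case: ifP; case: ifP; lia. Qed.

Lemma nth_bm m d l q r : 2 * d < l -> r < l -> nth false (bm m d l q) r = false ->
  (0 < q /\ r <= d) \/ (q < m.-1 /\ l - d <= r).
Proof.
move=> h hr; rewrite /bm !nth_cat !size_nseq !nth_nseq.
case: ifP; case: ifP; repeat case: ifP; lia.
Qed.

Lemma nth_flat l (ss : seq bitseq) q r : (forall s, s \in ss -> size s = l) -> r < l ->
  nth false (flatten ss) (q * l + r) = nth false (nth [::] ss q) r.
Proof.
elim: ss q => [|s ss IH] q hs hr /=; first by rewrite !nth_nil.
rewrite nth_cat hs ?mem_head //.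
case: q => [|q] /=; first by rewrite hr.
rewrite mulSn.
have -> : (l + q * l + r < l) = false by lia.
have -> : l + q * l + r - l = q * l + r by lia.
rewrite IH // => s' hs'.
by apply: hs; rewrite in_cons hs' orbT.
Qed.

Lemma mask_agree (M x x' : bitseq) : size x = size M -> size x' = size M ->
  mask M x = mask M x' -> forall i, nth false M i -> nth false x i = nth false x' i.
Proof.
elim: M x x' => [|b M IH] [|a x] [|a' x'] //= h1 h2; try by [].
case: b => /= E [|i] //=.
- by case: E.
- move=> hi; apply: IH => //; [by case: h1 | by case: h2 | by case: E].
- move=> hi; apply: IH => //; [by case: h1 | by case: h2].
Qed.

Lemma sumn_const c (s : seq nat) : sumn [seq c | _ <- s] = c * size s.
Proof. elim: s => [|a s IH] /=; [by rewrite muln0 | rewrite IH; lia]. Qed.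

Lemma count_M m' d l : 2 * d < l ->
  count id (flatten [seq bm m'.+2 d l q | q <- iota 0 m'.+2]) + (2 * d + 1) * m'.+1 = m'.+2 * l.
Proof.
move=> h; rewrite count_flatten -map_comp.
rewrite (eq_map (fun q => count_bm m'.+2 q h)).
have E : {in iota 1 m', (fun q => l - (if 0 < q then d.+1 else 0) - (if q < m'.+2.-1 then d else 0)) =1 (fun _ => l - (2 * d + 1))}.
  move=> q; rewrite mem_iota => hq /=.
  have -> : 0 < q by lia. have -> : q < m'.+1 by lia. lia.
have -> : m'.+2 = 1 + (m' + 1) by lia.
rewrite iotaD iotaD !map_cat !sumn_cat.
have -> : 1 + (m' + 1) = m'.+2 by lia.
rewrite (proj1 (eq_in_map _ _ _) E) sumn_const size_iota /=.
have -> : (0 + 1 + m' < m'.+1) = false by lia.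
rewrite mulnBl; nia.
Qed.

Theorem theorem3 (d l n : nat) (C : {set n.-tuple bool}) :
  0 < d -> 0 < l -> 0 < n -> l %| n -> 2 * d < l -> l <= n %/ 2 ->
  detects d l C -> bbb_decodable d l C ->
  2 ^ ((2 * d + 1) * (n %/ l - 1)) * #|C| <= 2 ^ n.
Proof.
move=> hd0 hl hn0 hdiv hdl hln _ [D HD0].
have HD : HBBB d l C D by [].
have hn : n = n %/ l * l by rewrite divnK.
set m := n %/ l. move: hn HD0 HD; rewrite -/m => hn HD0 HD.
have hm2 : 2 <= m.
  move: hln; rewrite leq_divRL // {1}hn => h.
  by rewrite -(leq_pmul2r hl); lia.
have hsl : forall x : n.-tuple bool, size x = m * l by move=> x; rewrite size_tuple.
set M := flatten [seq bm m d l q | q <- iota 0 m].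
have hsM : size M = n.
  rewrite size_flatten /shape -map_comp (eq_map (fun q => size_bm m q hdl)).
  by rewrite sumn_const size_iota hn mulnC.
have hnthM : forall q r, q < m -> r < l -> nth false M (q * l + r) = nth false (bm m d l q) r.
  move=> q r hq hr; rewrite nth_flat //.
    by rewrite (nth_map 0) ?size_iota // nth_iota.
  by move=> s /mapP [q' _ ->]; apply: size_bm.
set k := count id M.
have hk : (2 * d + 1) * (m - 1) + k = n.
  move: (count_M (m - 2) hdl); rewrite /k /M.
  have -> : (m - 2).+2 = m by lia.
  have -> : (m - 2).+1 = m - 1 by lia.
  by move=> E; rewrite [RHS]hn -E addnC.
pose g := fun x : n.-tuple bool => insubd (nseq_tuple k false) (mask M x) : k.-tuple bool.
have hg : forall x, val (g x) = mask M x.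
  by move=> x; rewrite /g insubdK // -topredE /= size_mask ?hsM ?size_tuple.
have hinj : {in C &, injective g}.
  move=> x x' hx hx' E.
  have Em : mask M x = mask M x' by rewrite -!hg E.
  have hagM := mask_agree (etrans (size_tuple x) (esym hsM)) (etrans (size_tuple x') (esym hsM)) Em.
  have hpos : forall q r, q < m -> r < l -> nth false (bm m d l q) r ->
      nth false x (q * l + r) = nth false x' (q * l + r).
    by move=> q r hq hr hb; apply: hagM; rewrite hnthM.
  have hbeta : forall j, j.+1 < m ->
      nth false x (j * l + (l - 1)) = nth false x' (j * l + (l - 1)).
    elim=> [|j IH] hj.
      apply: (Cross HD) => // r hr.
      case E0: (nth false (bm m d l 0) r); first by apply: hpos => //; lia.
      have := nth_bm hdl (leq_trans hr (leq_subr _ _)) E0; lia.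
    apply: (Cross HD) => // r hr.
    case E0: (nth false (bm m d l j.+1) r); first by apply: hpos => //; lia.
    have [[_ hrd]|] := nth_bm hdl (leq_trans hr (leq_subr _ _)) E0; last lia.
    rewrite !(S1 HD) //; rewrite -/m; try lia.
    congr (~~ _); apply: IH; lia.
  apply: val_inj; apply: (eq_from_nth (x0 := false)); first by rewrite !size_tuple.
  move=> p; rewrite size_tuple => hp.
  have hr : p %% l < l by rewrite ltn_pmod.
  have hq : p %/ l < m by rewrite ltn_divLR // -hn.
  rewrite (divn_eq p l).
  case E0: (nth false (bm m d l (p %/ l)) (p %% l)); first by apply: hpos.
  have [[h1 h2]|[h1 h2]] := nth_bm hdl hr E0.
    have -> : p %/ l = (p %/ l).-1.+1 by lia.
    rewrite !(S1 HD) // ?hbeta //; lia.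
  have -> : p %% l = l - 1 - (l - 1 - p %% l) by lia.
  rewrite !(S2 HD) // ?hbeta //; lia.
have hC : #|C| <= 2 ^ k.
  rewrite -(card_in_imset hinj).
  apply: leq_trans (max_card _) _.
  by rewrite card_tuple card_bool.
rewrite -[X in _ <= 2 ^ X]hk expnD leq_mul2l hC orbT //.
Qed.
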